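(* Let $R,S$ be rings with identity and ring homomorphisms $\rho:R\to S$, $\iota:S\to R$ with $\rho\iota=\mathrm{id}_S$. Let $M\alpha L$ be a retractive pair and $n\ge 0$. If $M$ is of type $FP_n$ as a left $R$-module, then there exist retractive pairs $P_i\beta_iF_i$ ($0\le i\le n$), with each $P_i$ a finitely generated free left $R$-module and each $F_i$ a finitely generated free left $S$-module, and mappings of retractive pairs $(\partial_0,\delta_0):P_0\beta_0F_0\to M\alpha L$ and $(\partial_i,\delta_i):P_i\beta_iF_i\to P_{i-1}\beta_{i-1}F_{i-1}$ ($1\le i\le n$), such that $\mathrm{Im}(\partial_0,\delta_0)=M\alpha L$ and $\mathrm{Im}(\partial_{i+1},\delta_{i+1})=\mathrm{Ker}(\partial_i,\delta_i)$ for $0\le i<n$. In particular $0\leftarrow L\xleftarrow{\delta_0}F_0\xleftarrow{\delta_1}F_1\leftarrow\cdots\xleftarrow{\delta_n}F_n$ is a partial free resolution of $L$, so $L$ is of type $FP_n$ as a left $S$-module.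
   Context: A module is of type $FP_n$ if there is an exact sequence $0\leftarrow M\leftarrow P_0\leftarrow\cdots\leftarrow P_n$ with $P_0,\dots,P_n$ finitely generated free modules. A (left) retractive pair $M\alpha L$ consists of a left $R$-module $M$, a left $S$-module $L$, and abelian group homomorphisms $\alpha^+:M\to L$, $\alpha^-:L\to M$ with $\alpha^+\alpha^-=\mathrm{id}_L$, where $\alpha^+$ is an $R$-module homomorphism (with $L$ an $R$-module via $\rho$) and $\alpha^-$ is an $S$-module homomorphism (with $M$ an $S$-module via $\iota$). A mapping $(\phi,\psi):M\alpha L\to M'\beta L'$ consists of an $R$-module homomorphism $\phi:M\to M'$ and an $S$-module homomorphism $\psi:L\to L'$ with $\beta^+\phi=\psi\alpha^+$ and $\phi\alpha^-=\beta^-\psi$. Then $\alpha^\pm$ restrict to give the retractive pair $\mathrm{Ker}(\phi,\psi)$ consisting of $\mathrm{Ker}\phi$, $\mathrm{Ker}\psi$ with maps $\alpha^+,\alpha^-$, and $\beta^\pm$ restrict to give the retractive pair $\mathrm{Im}(\phi,\psi)$ consisting of $\mathrm{Im}\phi$, $\mathrm{Im}\psi$ with maps $\beta^+,\beta^-$. Equality of retractive pairs here means equality of both underlying modules (as subpairs). *)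

(* Defs.v *)
From HB Require Import structures.
From mathcomp Require Import all_boot all_order all_algebra.
Set Implicit Arguments. Unset Strict Implicit. Unset Printing Implicit Defensive.
Import GRing.Theory.
Local Open Scope ring_scope.

(* A finitely generated free left
   R-module is represented by 'rV[R]_k (= R^k with left scalar action). *)

Definition slin (A B : pzRingType) (sigma : A -> B)
    (U : lmodType A) (V : lmodType B) (f : U -> V) : Prop :=
  (forall x y, f (x + y) = f x + f y) /\ (forall a x, f (a *: x) = sigma a *: f x).

Definition lin (A : pzRingType) (U V : lmodType A) (f : U -> V) : Prop :=
  @slin A A id U V f.

Definition surj (X Y : Type) (f : X -> Y) : Prop := forall y, exists x, f x = y.

Definition exact_at (A : pzRingType) (U V W : lmodType A)
    (g : U -> V) (f : V -> W) : Prop :=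
  forall v, f v = 0 <-> exists u, g u = v.

(* M is of type FP_n: exact  0 <- M <- P_0 <- P_1 <- ... <- P_n, P_i = R^(k i),
   d0 : P_0 -> M, d i : P_(i+1) -> P_i  (i < n). *)
Definition FP (A : pzRingType) (n : nat) (M : lmodType A) : Prop :=
  exists (k : nat -> nat) (d0 : 'rV[A]_(k 0%N) -> M)
         (d : forall i, 'rV[A]_(k i.+1) -> 'rV[A]_(k i)),
    [/\ lin d0, forall i, (i < n)%N -> lin (d i), surj d0,
        (0 < n)%N -> exact_at (d 0%N) d0
      & forall i, (i.+1 < n)%N -> exact_at (d i.+1) (d i)].

(* retractive pair M alpha L : ap = alpha^+, am = alpha^- *)
Definition retractive (R S : pzRingType) (rho : R -> S) (iota : S -> R)
    (M : lmodType R) (L : lmodType S) (ap : M -> L) (am : L -> M) : Prop :=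
  [/\ slin rho ap, slin iota am & cancel am ap].

Definition rp_map (R S : pzRingType)
    (M : lmodType R) (L : lmodType S) (ap : M -> L) (am : L -> M)
    (M' : lmodType R) (L' : lmodType S) (bp : M' -> L') (bm : L' -> M')
    (phi : M -> M') (psi : L -> L') : Prop :=
  [/\ lin phi, lin psi, (forall m, bp (phi m) = psi (ap m))
    & (forall l, phi (am l) = bm (psi l))].

(* Main.v *)
Require Import Defs.
From HB Require Import structures.
From mathcomp Require Import all_boot all_order all_algebra.
Import GRing.Theory.
Local Open Scope ring_scope.

Set Implicit Arguments. Unset Strict Implicit. Unset Printing Implicit Defensive.


Lemma slin0 (A B : pzRingType) (sigma : A -> B) (U : lmodType A) (V : lmodType B) (f : U -> V) :
  slin sigma f -> f 0 = 0.
Proof. by case=> hD _; apply: (addrI (f 0)); rewrite -hD !addr0. Qed.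

Lemma slinN (A B : pzRingType) (sigma : A -> B) (U : lmodType A) (V : lmodType B) (f : U -> V) :
  slin sigma f -> forall x, f (- x) = - f x.
Proof. move=> hf x; apply: (addrI (f x)); by rewrite -hf.1 !subrr (slin0 hf). Qed.

Definition kerT (A : pzRingType) (U V : lmodType A) (f : U -> V) (hf : lin f) :=
  {x : U | f x == 0}.

Section KerMod.
Variables (A : pzRingType) (U V : lmodType A) (f : U -> V) (hf : lin f).
Local Notation K := (kerT hf).
HB.instance Definition _ := Choice.on K.
Lemma k0P : f 0 == 0. Proof. by rewrite (slin0 hf). Qed.
Lemma kaddP (x y : K) : f (val x + val y) == 0.
Proof. by rewrite hf.1 (eqP (valP x)) (eqP (valP y)) addr0. Qed.
Lemma koppP (x : K) : f (- val x) == 0.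
Proof. by rewrite (slinN hf) (eqP (valP x)) oppr0. Qed.
Lemma kscaleP a (x : K) : f (a *: val x) == 0.
Proof. by rewrite hf.2 (eqP (valP x)) scaler0. Qed.
Definition kzero : K := @exist U (fun z => f z == 0) 0 k0P.
Definition kadd (x y : K) : K := @exist U (fun z => f z == 0) _ (kaddP x y).
Definition kopp (x : K) : K := @exist U (fun z => f z == 0) _ (koppP x).
Definition kscale a (x : K) : K := @exist U (fun z => f z == 0) _ (kscaleP a x).
Lemma kaddA : associative kadd. Proof. by move=> x y z; apply: val_inj; rewrite /= addrA. Qed.
Lemma kaddC : commutative kadd. Proof. by move=> x y; apply: val_inj; rewrite /= addrC. Qed.
Lemma kadd0 : left_id kzero kadd. Proof. by move=> x; apply: val_inj; rewrite /= add0r. Qed.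
Lemma kaddN : left_inverse kzero kopp kadd. Proof. by move=> x; apply: val_inj; rewrite /= addNr. Qed.
HB.instance Definition _ := GRing.isZmodule.Build K kaddA kaddC kadd0 kaddN.
Lemma kscaleA a b (v : K) : kscale a (kscale b v) = kscale (a * b) v.
Proof. by apply: val_inj; rewrite /= scalerA. Qed.
Lemma kscale1 : left_id 1 kscale. Proof. by move=> x; apply: val_inj; rewrite /= scale1r. Qed.
Lemma kscaleDr : right_distributive kscale +%R.
Proof. by move=> a x y; apply: val_inj; rewrite /= scalerDr. Qed.
Lemma kscaleDl v : {morph kscale^~ v : a b / a + b}.
Proof. by move=> a b; apply: val_inj; rewrite /= scalerDl. Qed.
HB.instance Definition _ := GRing.Zmodule_isLmodule.Build A K kscaleA kscale1 kscaleDr kscaleDl.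
Lemma val_lin : lin (val : K -> U). Proof. by split. Qed.
Lemma kval0 : val (0 : K) = 0. Proof. by []. Qed.
End KerMod.


Lemma slin_sum (A B : pzRingType) (sigma : A -> B) (U : lmodType A) (V : lmodType B) (f : U -> V)
  (I : Type) (r : seq I) (P : pred I) (F : I -> U) :
  slin sigma f -> f (\sum_(i <- r | P i) F i) = \sum_(i <- r | P i) f (F i).
Proof.
move=> hf; elim/big_rec2: _ => [|i x y _ <-]; first exact: slin0 hf.
by rewrite hf.1.
Qed.

Definition comb (A : pzRingType) (V : lmodType A) k (c : 'I_k -> V) (z : 'rV[A]_k) : V :=
  \sum_(j < k) z 0 j *: c j.

Lemma comb_lin (A : pzRingType) (V : lmodType A) k (c : 'I_k -> V) : lin (comb c).
Proof.
split=> [x y|a x]; rewrite /comb.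
  by rewrite -big_split /=; apply: eq_bigr => j _; rewrite mxE scalerDl.
by rewrite scaler_sumr; apply: eq_bigr => j _; rewrite mxE scalerA.
Qed.

Lemma lin_comb (A : pzRingType) (V : lmodType A) k (f : 'rV[A]_k -> V) :
  lin f -> forall z, f z = comb (fun j => f (delta_mx 0 j)) z.
Proof.
move=> hf z; rewrite {1}(row_sum_delta z) (slin_sum _ _ _ hf) /comb.
by apply: eq_bigr => j _; rewrite hf.2.
Qed.

Lemma lift_free (A : pzRingType) k (U V : lmodType A) (g : U -> V) (psi : 'rV[A]_k -> V) :
  lin g -> surj g -> lin psi -> exists chi, lin chi /\ forall v, g (chi v) = psi v.
Proof.
move=> hg sg hpsi.
have [c hc] := fin_all_exists (fun j : 'I_k => sg (psi (delta_mx 0 j))).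
exists (comb c); split; first exact: comb_lin.
move=> v; rewrite (lin_comb hpsi v) /comb (slin_sum _ _ _ hg).
by apply: eq_bigr => j _; rewrite hg.2 hc.
Qed.

Section LinLemmas.
Variable A : pzRingType.
Lemma lin_id (U : lmodType A) : lin (@id U). Proof. by split. Qed.
Lemma lin_add (U V : lmodType A) (f g : U -> V) : lin f -> lin g -> lin (fun x => f x + g x).
Proof.
move=> hf hg; split=> [x y|c x]; first by rewrite hf.1 hg.1 addrACA.
by rewrite hf.2 hg.2 scalerDr.
Qed.
Lemma lin_comp (U V W : lmodType A) (f : V -> W) (g : U -> V) : lin f -> lin g -> lin (fun x => f (g x)).
Proof. by move=> hf hg; split=> [x y|c x]; [rewrite hg.1 hf.1 | rewrite hg.2 hf.2]. Qed.
Lemma lin_row m n1 n2 (f1 : 'rV[A]_m -> 'rV[A]_n1) (f2 : 'rV[A]_m -> 'rV[A]_n2) :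
  lin f1 -> lin f2 -> lin (fun x => row_mx (f1 x) (f2 x)).
Proof.
move=> h1 h2; split=> [x y|c x]; first by rewrite h1.1 h2.1 add_row_mx.
by rewrite h1.2 h2.2 scale_row_mx.
Qed.
Lemma lin_lsub n1 n2 : lin (@lsubmx A 1 n1 n2).
Proof. by split=> [x y|c x]; apply/matrixP => i j; rewrite !mxE. Qed.
Lemma lin_rsub n1 n2 : lin (@rsubmx A 1 n1 n2).
Proof. by split=> [x y|c x]; apply/matrixP => i j; rewrite !mxE. Qed.
Lemma lin_0 (U V : lmodType A) : lin (fun _ : U => (0 : V)).
Proof. by split=> [x y|c x]; rewrite ?addr0 ?scaler0. Qed.
End LinLemmas.

Section Schanuel.
Variables (A : pzRingType) (n : nat) (M : lmodType A) (a : nat) (g : 'rV[A]_a -> M) (hg : lin g).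

Lemma FP_ker : surj g -> FP n.+1 M -> FP n (kerT hg).
Proof.
move=> sg [k [d0 [d [ld0 ld sd0 ex0 exS]]]].
have ex0' := ex0 isT.
have dd0 : forall w, d0 (d 0%N w) = 0 by move=> w; apply/ex0'; exists w.
have ld0' : lin (d 0%N) by apply: ld.
have [h [lh dh]] := lift_free (psi:=g) ld0 sd0 hg.
pose delta (x : 'rV[A]_(k 1%N + a)) := d 0%N (lsubmx x) + h (rsubmx x).
have ldelta : lin delta.
  by apply: lin_add; apply: lin_comp => //; [apply: lin_lsub | apply: lin_rsub].
have sdelta : surj delta.
  move=> v; have [u hu] := sg (d0 v).
  have : d0 (v - h u) = 0 by rewrite ld0.1 (slinN ld0) dh hu subrr.
  move/ex0' => [w hw]; exists (row_mx w u).
  by rewrite /delta row_mxKl row_mxKr hw subrK.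
have [s [ls ds]] := lift_free (psi:=id) ldelta sdelta (lin_id _).
have e0P : forall x, g (rsubmx (x - s (delta x))) == 0.
  move=> x; set y := x - s (delta x).
  have dy : delta y = 0 by rewrite /y ldelta.1 (slinN ldelta) ds subrr.
  have := congr1 d0 dy; rewrite /delta ld0.1 dd0 add0r dh (slin0 ld0) => ->.
  exact: eqxx.
pose e0 x : kerT hg := @exist _ (fun z => g z == 0) _ (e0P x).
pose k' i := match i with 0 => (k 1%N + a)%N | 1 => (k 2%N + k 0%N)%N | j.+2 => k j.+3 end.
pose d' : forall i, 'rV[A]_(k' i.+1) -> 'rV[A]_(k' i) := fun i =>
  match i return 'rV[A]_(k' i.+1) -> 'rV[A]_(k' i) with
  | 0 => fun y : 'rV[A]_(k 2%N + k 0%N) => row_mx (d 1%N (lsubmx y)) 0 + s (rsubmx y)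
  | 1 => fun z : 'rV[A]_(k 3%N) => row_mx (d 2%N z) (0 : 'rV[A]_(k 0%N))
  | j.+2 => d j.+3 end.
exists k', e0, d'; split.
- split=> [x y|c x]; apply: val_inj => /=.
    by rewrite ldelta.1 ls.1 opprD addrACA linearD.
  by rewrite ldelta.2 ls.2 -scalerBr linearZ.
- case=> [|[|j]] hi; rewrite /d' /=.
  + apply: (lin_add (f := fun y : 'rV[A]_(k 2%N + k 0%N) => row_mx (d 1%N (lsubmx y)) (0 : 'rV[A]_a)) (g := fun y : 'rV[A]_(k 2%N + k 0%N) => s (rsubmx y))).
    * apply: (lin_row (f2 := fun _ => 0)); last exact: lin_0.
      exact: (lin_comp (ld 1%N hi) (lin_lsub _ _ _)).
    * exact: (lin_comp ls (lin_rsub _ _ _)).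
  + apply: (lin_row (f1 := d 2%N) (f2 := fun _ => (0 : 'rV[A]_(k 0%N)))); last exact: lin_0.
    exact: ld.
  + exact: ld.
- move=> kap.
  have hk : d0 (h (val kap)) = 0 by rewrite dh (eqP (valP kap)).
  have [w hw] := (ex0' _).1 hk.
  exists (row_mx (- w) (val kap)); apply: val_inj => /=.
  have -> : delta (row_mx (- w) (val kap)) = 0.
    by rewrite /delta row_mxKl row_mxKr (slinN ld0') hw addNr.
  by rewrite (slin0 ls) subr0 row_mxKr.
- move=> n0 v; rewrite /d' /=; split.
  + move/(congr1 val) => /= hv.
    set y := v - s (delta v) in hv.
    have dy : delta y = 0 by rewrite /y ldelta.1 (slinN ldelta) ds subrr.
    move: dy; rewrite /delta hv (slin0 lh) addr0 => /(exS 0%N n0 _).1 [z hz].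
    exists (row_mx z (delta v)) => /=.
    by rewrite row_mxKl row_mxKr hz -hv hsubmxK /y subrK.
  + move=> [u <-]; apply: val_inj => /=.
    have e1 : exact_at (d 1%N) (d 0%N) := exS 0%N n0.
    have dd1 : forall z, d 0%N (d 1%N z) = 0 by move=> z; apply/e1; exists z.
    rewrite ldelta.1 ds.
    have -> : delta (row_mx (d 1%N (lsubmx u)) 0) = 0.
      by rewrite /delta row_mxKl row_mxKr dd1 (slin0 lh) addr0.
    by rewrite add0r addrK row_mxKr.
- case=> [|[|j]] hi; rewrite /d' /=.
  + have e1 : exact_at (d 1%N) (d 0%N) := exS 0%N (ltnW hi).
    have dd1 : forall z, d 0%N (d 1%N z) = 0 by move=> z; apply/e1; exists z.
    have e2 : exact_at (d 2%N) (d 1%N) := exS 1%N hi.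
    move=> x; split.
    * move=> hx.
      have := congr1 delta hx; rewrite ldelta.1 ds (slin0 ldelta).
      rewrite /delta row_mxKl row_mxKr dd1 (slin0 lh) !add0r => hr.
      move: hx; rewrite hr (slin0 ls) addr0.
      move/eqP; rewrite row_mx_eq0 => /andP[/eqP /e2 [y hy] _].
      by exists y; rewrite hy -hr hsubmxK.
    * move=> [y <-]; rewrite row_mxKl row_mxKr.
      have -> : d 1%N (d 2%N y) = 0 by apply/e2; exists y.
      by rewrite (slin0 ls) addr0 row_mx0.
  + have e3 : exact_at (d 3%N) (d 2%N) := exS 2%N hi.
    move=> x; split.
    * by move/eqP; rewrite row_mx_eq0 => /andP[/eqP /e3 [y hy] _]; exists y.
    * move=> [y <-]; have -> : d 2%N (d 3%N y) = 0 by apply/e3; exists y.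
      by rewrite row_mx0.
  + exact: exS.
Qed.
End Schanuel.

Lemma slin_comb (A B : pzRingType) (sigma : A -> B) (U : lmodType A) (V : lmodType B) (f : U -> V)
  k (c : 'I_k -> U) (w : 'rV[A]_k) :
  slin sigma f -> f (comb c w) = \sum_(j < k) sigma (w 0 j) *: f (c j).
Proof. by move=> hf; rewrite /comb (slin_sum _ _ _ hf); apply: eq_bigr => j _; rewrite hf.2. Qed.

Section Level0.
Variables (R S : pzRingType) (rho : {rmorphism R -> S}) (iota : {rmorphism S -> R}).
Hypothesis hcan : cancel iota rho.

Lemma level0 (M : lmodType R) (L : lmodType S) (ap : M -> L) (am : L -> M) k0 (d0 : 'rV[R]_k0 -> M) :
  retractive rho iota ap am -> lin d0 -> surj d0 ->
  exists (bp0 : 'rV[R]_(k0 + k0) -> 'rV[S]_k0) (bm0 : 'rV[S]_k0 -> 'rV[R]_(k0 + k0))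
         (p0 : 'rV[R]_(k0 + k0) -> M) (q0 : 'rV[S]_k0 -> L),
    [/\ retractive rho iota bp0 bm0, rp_map bp0 bm0 ap am p0 q0, surj p0 & surj q0].
Proof.
move=> [hap ham apK] ld0 sd0.
pose m j := d0 (delta_mx 0 j).
pose c1 j := am (ap (m j)).
pose c2 j := m j - am (ap (m j)).
pose bp0 (z : 'rV[R]_(k0 + k0)) : 'rV[S]_k0 := map_mx rho (lsubmx z).
pose bm0 (y : 'rV[S]_k0) : 'rV[R]_(k0 + k0) := row_mx (map_mx iota y) 0.
pose p0 (z : 'rV[R]_(k0 + k0)) := comb c1 (lsubmx z) + comb c2 (rsubmx z).
pose q0 (y : 'rV[S]_k0) := comb (fun j => ap (m j)) y.
have hc2 : forall j, ap (c2 j) = 0.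
  by move=> j; rewrite /c2 hap.1 (slinN hap) apK subrr.
exists bp0, bm0, p0, q0; split.
- split.
  + by split=> [x y|a x]; apply/matrixP => i j; rewrite !mxE ?rmorphD ?rmorphM.
  + split=> [x y|a x]; apply/matrixP => i j; rewrite !mxE; case: splitP => j' _;
      by rewrite !mxE ?rmorphD ?rmorphM ?addr0 ?mulr0.
  + by move=> y; rewrite /bp0 /bm0 row_mxKl; apply/matrixP => i j; rewrite !mxE hcan.
- split.
  + rewrite /p0; apply: (lin_add (f := fun z : 'rV[R]_(k0 + k0) => comb c1 (lsubmx z)) (g := fun z : 'rV[R]_(k0 + k0) => comb c2 (rsubmx z))).
      exact: (lin_comp (comb_lin c1) (lin_lsub _ _ _)).
    exact: (lin_comp (comb_lin c2) (lin_rsub _ _ _)).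
  + exact: comb_lin.
  + move=> z; rewrite /p0 hap.1 !(slin_comb _ _ hap) /q0 /comb.
    rewrite [X in _ + X]big1 ?addr0 => [|j _]; last by rewrite hc2 scaler0.
    by apply: eq_bigr => j _; rewrite /c1 apK !mxE.
  + move=> y; rewrite /p0 /bm0 row_mxKl row_mxKr /q0 (slin_comb _ _ ham) /comb.
    rewrite [X in _ + X]big1 ?addr0 => [|j _]; last by rewrite mxE scale0r.
    by apply: eq_bigr => j _; rewrite /c1 mxE.
- move=> x0; have [x <-] := sd0 x0.
  exists (row_mx x x); rewrite /p0 row_mxKl row_mxKr (lin_comb ld0 x) /comb -big_split /=.
  by apply: eq_bigr => j _; rewrite -scalerDr /c1 /c2 addrC subrK.
- move=> l; have [x hx] := sd0 (am l).
  exists (map_mx rho x); rewrite -[l]apK -hx (lin_comb ld0 x) (slin_comb _ _ hap) /q0 /comb.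
  by apply: eq_bigr => j _; rewrite mxE.
Qed.
End Level0.

Section Main.
Variables (R S : pzRingType) (rho : {rmorphism R -> S}) (iota : {rmorphism S -> R}).
Hypothesis hcan : cancel iota rho.

Lemma main n : forall (M : lmodType R) (L : lmodType S) (ap : M -> L) (am : L -> M),
  retractive rho iota ap am ->
  FP n M ->
  (exists (k l : nat -> nat)
          (bp : forall i, 'rV[R]_(k i) -> 'rV[S]_(l i))
          (bm : forall i, 'rV[S]_(l i) -> 'rV[R]_(k i))
          (p0 : 'rV[R]_(k 0%N) -> M) (q0 : 'rV[S]_(l 0%N) -> L)
          (p : forall i, 'rV[R]_(k i.+1) -> 'rV[R]_(k i))
          (q : forall i, 'rV[S]_(l i.+1) -> 'rV[S]_(l i)),
     [/\ forall i, (i <= n)%N -> retractive rho iota (bp i) (bm i),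
         rp_map (bp 0%N) (bm 0%N) ap am p0 q0
       & forall i, (i < n)%N ->
           rp_map (bp i.+1) (bm i.+1) (bp i) (bm i) (p i) (q i)]
     /\ [/\ surj p0 /\ surj q0,
         (0 < n)%N -> exact_at (p 0%N) p0 /\ exact_at (q 0%N) q0
       & forall i, (i.+1 < n)%N ->
           exact_at (p i.+1) (p i) /\ exact_at (q i.+1) (q i)]).
Proof.
elim: n => [|n IH] M L ap am hret hFP.
  have [k [d0 [d [ld0 _ sd0 _ _]]]] := hFP.
  have [bp0 [bm0 [p0 [q0 [hr hrp sp sq]]]]] := level0 hcan hret ld0 sd0.
  exists (fun _ => (k 0%N + k 0%N)%N), (fun _ => k 0%N), (fun _ => bp0), (fun _ => bm0), p0, q0,
    (fun _ => fun _ => 0), (fun _ => fun _ => 0).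
  by split; split => // i; rewrite ?leqn0 => // /eqP ->.
have [k [d0 [d [ld0 _ sd0 _ _]]]] := hFP.
have [bp0 [bm0 [p0 [q0 [hr hrp sp sq]]]]] := level0 hcan hret ld0 sd0.
have [hp0 hq0 hc1 hc2] := hrp.
have [hap ham apK] := hret.
have [hbp hbm bpK] := hr.
pose KP := kerT hp0.
pose KL := kerT hq0.
have apP : forall x : KP, q0 (bp0 (val x)) == 0.
  by move=> x; rewrite -hc1 (eqP (valP x)) (slin0 hap).
have amP : forall y : KL, p0 (bm0 (val y)) == 0.
  by move=> y; rewrite hc2 (eqP (valP y)) (slin0 ham).
pose ap' (x : KP) : KL := @exist _ (fun z => q0 z == 0) _ (apP x).
pose am' (y : KL) : KP := @exist _ (fun z => p0 z == 0) _ (amP y).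
have hret' : retractive rho iota ap' am'.
  split.
  - by split=> [x y|c x]; apply: val_inj => /=; [rewrite hbp.1 | rewrite hbp.2].
  - by split=> [x y|c x]; apply: val_inj => /=; [rewrite hbm.1 | rewrite hbm.2].
  - by move=> y; apply: val_inj => /=.
have hFP' : FP n KP := FP_ker hp0 sp hFP.
have [k' [l' [bp' [bm' [p0' [q0' [p' [q' [[hr' hrp0' hrp'] [[sp' sq'] he0' he']]]]]]]]]] :=
  IH KP KL ap' am' hret' hFP'.
pose kk i := match i with 0 => (k 0%N + k 0%N)%N | j.+1 => k' j end.
pose ll i := match i with 0 => k 0%N | j.+1 => l' j end.
pose bp : forall i, 'rV[R]_(kk i) -> 'rV[S]_(ll i) := fun i =>
  match i return 'rV[R]_(kk i) -> 'rV[S]_(ll i) with 0 => bp0 | j.+1 => bp' j end.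
pose bm : forall i, 'rV[S]_(ll i) -> 'rV[R]_(kk i) := fun i =>
  match i return 'rV[S]_(ll i) -> 'rV[R]_(kk i) with 0 => bm0 | j.+1 => bm' j end.
pose p : forall i, 'rV[R]_(kk i.+1) -> 'rV[R]_(kk i) := fun i =>
  match i return 'rV[R]_(kk i.+1) -> 'rV[R]_(kk i) with
  | 0 => fun x : 'rV[R]_(k' 0%N) => val (p0' x) | j.+1 => p' j end.
pose q : forall i, 'rV[S]_(ll i.+1) -> 'rV[S]_(ll i) := fun i =>
  match i return 'rV[S]_(ll i.+1) -> 'rV[S]_(ll i) with
  | 0 => fun x : 'rV[S]_(l' 0%N) => val (q0' x) | j.+1 => q' j end.
exists kk, ll, bp, bm, p0, q0, p, q; split; split.
- by case=> [|j] hj //=; apply: hr'.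
- exact: hrp.
- case=> [|j] hj; rewrite /p /q /bp /bm /=; last exact: hrp'.
  have [hp0' hq0' hc1' hc2'] := hrp0'.
  split.
  + by split=> [x y|c x]; rewrite ?hp0'.1 ?hp0'.2.
  + by split=> [x y|c x]; rewrite ?hq0'.1 ?hq0'.2.
  + by move=> x; rewrite -hc1'.
  + by move=> y; rewrite hc2'.
- by [].
- move=> _; rewrite /p /q /=; split=> v; split.
  + by move=> hv; have [u hu] := sp' (@exist _ (fun z => p0 z == 0) v (introT eqP hv)); exists u; rewrite hu.
  + by move=> [u <-]; apply/eqP; exact: (valP (p0' u)).
  + by move=> hv; have [u hu] := sq' (@exist _ (fun z => q0 z == 0) v (introT eqP hv)); exists u; rewrite hu.
  + by move=> [u <-]; apply/eqP; exact: (valP (q0' u)).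
- case=> [|j] hj; rewrite /p /q /=; last exact: he'.
  have [e1 e2] := he0' hj.
  split=> v; split.
  + by move=> hv; apply/e1; apply: val_inj.
  + by move/e1 => ->.
  + by move=> hv; apply/e2; apply: val_inj.
  + by move/e2 => ->.
Qed.
End Main.

Unset Implicit Arguments.

Theorem proposition1 (R S : pzRingType)
    (rho : {rmorphism R -> S}) (iota : {rmorphism S -> R})
    (M : lmodType R) (L : lmodType S) (ap : M -> L) (am : L -> M) (n : nat) :
  cancel iota rho ->
  retractive rho iota ap am ->
  FP n M ->
  (exists (k l : nat -> nat)
          (bp : forall i, 'rV[R]_(k i) -> 'rV[S]_(l i))
          (bm : forall i, 'rV[S]_(l i) -> 'rV[R]_(k i))
          (p0 : 'rV[R]_(k 0%N) -> M) (q0 : 'rV[S]_(l 0%N) -> L)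
          (p : forall i, 'rV[R]_(k i.+1) -> 'rV[R]_(k i))
          (q : forall i, 'rV[S]_(l i.+1) -> 'rV[S]_(l i)),
     [/\ forall i, (i <= n)%N -> retractive rho iota (bp i) (bm i),
         rp_map (bp 0%N) (bm 0%N) ap am p0 q0
       & forall i, (i < n)%N ->
           rp_map (bp i.+1) (bm i.+1) (bp i) (bm i) (p i) (q i)]
     /\ [/\ surj p0 /\ surj q0,
         (0 < n)%N -> exact_at (p 0%N) p0 /\ exact_at (q 0%N) q0
       & forall i, (i.+1 < n)%N ->
           exact_at (p i.+1) (p i) /\ exact_at (q i.+1) (q i)])
  /\ FP n L.
Proof.
move=> hcan hret hFP.
have H := main hcan hret hFP.
split; first exact: H.
case: H => [k [l [bp [bm [p0 [q0 [p [q [[hr hrp0 hrp] [[sp sq] he0 he]]]]]]]]]].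
exists l, q0, q; split.
- by case: hrp0.
- by move=> i hi; case: (hrp i hi).
- exact: sq.
- by move=> h; case: (he0 h).
- by move=> i hi; case: (he i hi).
Qed.
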